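(* For every integer $m\ge1$ and all integers $a,b\ge 1$, $$M\big(\mathcal G(m,a)\,\mathcal G(m,-b)\big)=M\big(\mathcal G(m,a-1)\,\mathcal G(m,-(b-1))\big),$$ and $M\big(\mathcal G(m,-a)\,\mathcal G(m,-b)\big)=M\big(\mathcal G(m,-(a+b))\big)$ for all integers $a,b\ge 0$. (Here $\mathcal G(m,0)$ for the factor with $a-1=0$ is interpreted via the same definition as for $n\le 0$.)
   Context: Grid conventions: an $m$-by-$N$ grid has vertices $(i,j)$, $1\le i\le m$ (rows), $1\le j\le N$ (columns); horizontal edges join $(i,j),(i,j+1)$, vertical edges join $(i,j),(i+1,j)$. A signed graph is a graph each of whose edges carries a sign $+1$ or $-1$ (parallel edges allowed). For a signed graph $\mathcal G$, $M(\mathcal G)$ denotes the sum over all perfect matchings of $\mathcal G$ of the product of the signs of the edges in the matching. For $m\ge1$ and $n\ge 1$, $\mathcal G(m,n)$ is the $m$-by-$n$ grid graph with all edges of sign $+1$. For $n\le 0$, $\mathcal G(m,n)$ has the vertex set of the $m$-by-$(2-n)$ grid, all horizontal edges of that grid with sign $+1$, the vertical edges lying in columns $2,3,\dots,1-n$ with sign $-1$, and no vertical edges in columns $1$ and $2-n$. For signed graphs $\mathcal G_1,\mathcal G_2$ whose vertex sets are those of $m$-row grids, the adjoined graph $\mathcal G_1\mathcal G_2$ is obtained by placing $\mathcal G_1$ to the left of $\mathcal G_2$ and joining, for each row $i$, the rightmost vertex of row $i$ of $\mathcal G_1$ to the leftmost vertex of row $i$ of $\mathcal G_2$ by an edge of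 sign $+1$. *)

(* Defs.v *)
From mathcomp Require Import all_boot all_order all_algebra.
Set Implicit Arguments. Unset Strict Implicit. Unset Printing Implicit Defensive.
Import Order.TTheory GRing.Theory Num.Theory.
Local Open Scope ring_scope.

(* A vertex (i,j) : row i, column j, both 1-indexed as in the paper. *)
Definition vertex := (nat * nat)%type.
(* A signed edge: two endpoints and a sign in {+1,-1} (as an int). *)
Definition sedge := (vertex * vertex * int)%type.

(* A signed graph whose vertex set is that of the m-by-N grid; the edge list
   may contain parallel edges. *)
Record sgraph := SGraph { nrows : nat; ncols : nat; edges : seq sedge }.

Definition grid_vertices (G : sgraph) : seq vertex :=
  [seq (i, j) | i <- iota 1 (nrows G), j <- iota 1 (ncols G)].

Definition dflt_edge : sedge := ((0%N, 0%N), (0%N, 0%N), 0).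

Definition incident (e : sedge) (v : vertex) : bool :=
  (v == e.1.1) || (v == e.1.2).

Definition perfect_matching (G : sgraph) (S : {set 'I_(size (edges G))}) : bool :=
  all (fun v => #|[set k in S | incident (nth dflt_edge (edges G) k) v]| == 1%N)
      (grid_vertices G).

Definition Msum (G : sgraph) : int :=
  \sum_(S : {set 'I_(size (edges G))} | perfect_matching S)
     \prod_(k in S) (nth dflt_edge (edges G) k).2.

Definition hedges (m N : nat) : seq sedge :=
  [seq ((i, j), (i, j.+1), 1) | i <- iota 1 m, j <- iota 1 N.-1].

Definition vedges (m : nat) (cols : seq nat) (s : int) : seq sedge :=
  [seq ((i, j), (i.+1, j), s) | i <- iota 1 m.-1, j <- cols].

Definition gridG (m : nat) (n : int) : sgraph :=
  if (0 < n) then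
    SGraph m `|n|%N (hedges m `|n|%N ++ vedges m (iota 1 `|n|%N) 1)
  else
    (* n <= 0 : 2 - n = 2 + |n| columns, vertical edges (sign -1) in columns
       2, ..., 1 - n = 1 + |n| *)
    SGraph m (2 + `|n|)%N (hedges m (2 + `|n|)%N ++ vedges m (iota 2 `|n|%N) (-1)).

Definition shift_edge (d : nat) (e : sedge) : sedge :=
  (((e.1.1.1, e.1.1.2 + d)%N, (e.1.2.1, e.1.2.2 + d)%N), e.2).

Definition adjoin (G1 G2 : sgraph) : sgraph :=
  SGraph (nrows G1) (ncols G1 + ncols G2)%N
    (edges G1 ++ map (shift_edge (ncols G1)) (edges G2)
      ++ [seq ((i, ncols G1), (i, (ncols G1).+1), 1) | i <- iota 1 (nrows G1)]).

(* Main.v *)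
Require Import Defs.
From mathcomp Require Import all_boot all_order all_algebra.
From mathcomp Require Import zify ring.
Import Order.TTheory GRing.Theory Num.Theory.
Local Open Scope ring_scope.
Set Implicit Arguments. Unset Strict Implicit. Unset Printing Implicit Defensive.


Lemma enum_filterT (T : finType) (A : {pred T}) : enum A = filter (mem A) (enum T).
Proof. by rewrite enumT. Qed.

Lemma card_set_count n (S : {set 'I_n}) (Q : pred 'I_n) :
  #|[set k in S | Q k]| = count Q (enum S).
Proof.
rewrite cardE (enum_filterT [set k in S | Q k]) size_filter (enum_filterT S) count_filter.
rewrite count_filter enumT; apply: eq_count => k /=; rewrite !inE andbC /=.
by case: (k \in S); case: (Q k).
Qed.

Definition bits n (S : {set 'I_n}) : bitseq := [seq k \in S | k <- enum 'I_n].

Lemma nth_bits n (S : {set 'I_n}) (k : 'I_n) : nth false (bits S) k = (k \in S).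
Proof.
by rewrite /bits (nth_map k) ?size_enum_ord ?nth_ord_enum.
Qed.

Lemma size_bits n (S : {set 'I_n}) : size (bits S) = n.
Proof. by rewrite size_map size_enum_ord. Qed.

Lemma enum_mask n (S : {set 'I_n}) : enum S = mask (bits S) (enum 'I_n).
Proof. by rewrite (enum_filterT S) filter_mask. Qed.

Lemma map_nth_enum (T : Type) (x0 : T) (s : seq T) :
  map (fun k : 'I_(size s) => nth x0 s k) (enum 'I_(size s)) = s.
Proof.
by rewrite (map_comp (nth x0 s) val) val_enum_ord -/(mkseq _ _) mkseq_nth.
Qed.

Fixpoint allmasks n : seq bitseq :=
  if n is n'.+1 then [seq true :: b | b <- allmasks n'] ++ [seq false :: b | b <- allmasks n']
  else [:: [::]].

Lemma mem_map_cons (b b' : bool) (bs : bitseq) (A : seq bitseq) :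
  (b :: bs \in map (cons b') A) = (b == b') && (bs \in A).
Proof.
elim: A => [|x A IH] /=; first by rewrite andbF.
by rewrite !inE IH eqseq_cons andb_orr.
Qed.

Lemma mem_allmasks n bs : (bs \in allmasks n) = (size bs == n).
Proof.
elim: n bs => [|n IH] [|b bs] /=; rewrite ?mem_cat ?mem_map_cons ?IH ?eqSS //.
all: try by apply/negbTE/negP => /orP[] /mapP[].
all: try by rewrite inE.
all: by case: b; rewrite ?orbF.
Qed.

Lemma allmasks_uniq n : uniq (allmasks n).
Proof.
elim: n => //= n IH; rewrite cat_uniq.
have inj b : injective (cons b : bitseq -> bitseq) by move=> x y [].
rewrite !map_inj_uniq ?IH //= andbT.
by apply/hasPn => x /mapP[y _ ->]; rewrite mem_map_cons.
Qed.

Lemma sum_sets n (f : bitseq -> int) :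
  \sum_(S : {set 'I_n}) f (bits S) = \sum_(bs <- allmasks n) f bs.
Proof.
rewrite -big_enum -(big_map (@bits n) xpredT f); apply: perm_big.
apply: uniq_perm; first rewrite map_inj_uniq ?enum_uniq //.
- move=> S1 S2 E; apply/setP => k; by rewrite -!nth_bits E.
- exact: allmasks_uniq.
move=> bs; rewrite mem_allmasks; apply/idP/idP.
  by case/mapP=> S _ E; rewrite E size_bits.
move/eqP=> Hs; apply/mapP; exists [set k : 'I_n | nth false bs k]; first by rewrite mem_enum.
apply: (@eq_from_nth _ false); first by rewrite size_bits Hs.
move=> i; rewrite Hs => Hi.
by rewrite (nth_bits _ (Ordinal Hi)) inE.
Qed.

Fixpoint Phi (es : seq sedge) (F : seq sedge -> int) : int :=
  if es is e :: es' then Phi es' (fun l => F (e :: l)) + Phi es' F else F [::].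

Lemma Phi_mask es F : Phi es F = \sum_(bs <- allmasks (size es)) F (mask bs es).
Proof.
elim: es F => [|e es IH] F /=; first by rewrite big_cons big_nil addr0.
by rewrite big_cat !big_map !IH.
Qed.

Lemma mask_bits (T : Type) (x0 : T) (es : seq T) (S : {set 'I_(size es)}) :
  mask (bits S) es = map (fun k : 'I_(size es) => nth x0 es k) (enum S).
Proof. by rewrite enum_mask map_mask map_nth_enum. Qed.

Definition pmF (V : seq vertex) (l : seq sedge) : int :=
  if all (fun v => count (fun e => incident e v) l == 1%N) V then \prod_(e <- l) e.2 else 0.

Lemma Msum_Phi G : Msum G = Phi (edges G) (pmF (grid_vertices G)).
Proof.
rewrite /Msum big_mkcond /= Phi_mask -sum_sets; apply: eq_bigr => S _.
rewrite (mask_bits dflt_edge).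
rewrite /pmF /perfect_matching; set L := map _ (enum S).
have -> : \prod_(k in S) (nth dflt_edge (edges G) k).2 = \prod_(e <- L) e.2.
  by rewrite big_map big_enum.
congr (if _ then _ else _); apply: eq_all => v.
by rewrite card_set_count count_map.
Qed.

Lemma Phi_ext_sub es F G : (forall l, subseq l es -> F l = G l) -> Phi es F = Phi es G.
Proof.
elim: es F G => [|e es IH] F G H /=; first by apply: H.
congr (_ + _); apply: IH => l sl; apply: H.
  by rewrite /= eqxx.
exact: (subseq_trans sl (subseq_cons es e)).
Qed.

Lemma Phi_ext es F G : (forall l, F l = G l) -> Phi es F = Phi es G.
Proof. by move=> H; apply: Phi_ext_sub => l _; apply: H. Qed.

Lemma Phi_cat a b F : Phi (a ++ b) F = Phi a (fun la => Phi b (fun lb => F (la ++ lb))).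
Proof.
elim: a F => [|e a IH] F /=; first by [].
by rewrite !IH.
Qed.

Lemma Phi_add es F G : Phi es (fun l => F l + G l) = Phi es F + Phi es G.
Proof.
elim: es F G => [|e es IH] F G //=.
rewrite (IH (fun l => F (e :: l))) IH; ring.
Qed.

Lemma Phi_scale es F k : Phi es (fun l => F l * k) = Phi es F * k.
Proof.
elim: es F => [|e es IH] F //=.
by rewrite (IH (fun l => F (e :: l))) IH mulrDl.
Qed.

Lemma Phi_sum (I : Type) (s : seq I) es (f : I -> seq sedge -> int) :
  Phi es (fun l => \sum_(x <- s) f x l) = \sum_(x <- s) Phi es (f x).
Proof.
elim: s => [|x s IH].
  rewrite big_nil (Phi_ext _ (G := fun _ => 0)) ?big_nil //.
  - by elim: es => //= e es IH; rewrite IH addr0.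
  - by move=> l; rewrite big_nil.
rewrite big_cons -IH -Phi_add; apply: Phi_ext => l; by rewrite big_cons.
Qed.

Definition perm_inv (F : seq sedge -> int) := forall l l', perm_eq l l' -> F l = F l'.

Lemma Phi_perm es es' F : perm_inv F -> perm_eq es es' -> Phi es F = Phi es' F.
Proof.
elim: es es' F => [|e es IH] es' F HF Hp.
  by move: (perm_size Hp); case: es' Hp.
have : e \in es' by rewrite -(perm_mem Hp) mem_head.
move=> Hin; case/splitPr: Hin Hp => l1 l2 Hp.
have Hp' : perm_eq es (l1 ++ l2).
  by rewrite -(perm_cons e) (perm_trans Hp) // -cat1s perm_catCA.
rewrite /= (IH _ _ _ Hp') ?(IH _ _ HF Hp'); last first.
  by move=> l l' pl; apply: HF; rewrite perm_cons.
rewrite !Phi_cat.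
transitivity (Phi l1 (fun la => Phi l2 (fun lb => F (e :: la ++ lb)) + Phi l2 (fun lb => F (la ++ lb)))); first by rewrite Phi_add.
apply: Phi_ext => la /=; congr (_ + _); apply: Phi_ext => lb.
by apply: HF; rewrite -cat1s perm_catCA.
Qed.


Fixpoint Dn (s : int) (E : seq nat) : int :=
  match E with
  | [::] => 1
  | e :: E' =>
    if e == 1%N then Dn s E'
    else if e == 0%N then
      (match E' with
       | [::] => 0
       | e' :: E'' => if e' == 0%N then s * Dn s E'' else 0
       end)
    else 0
  end.

Definition pl (S Y : bitseq) : seq nat := map (fun p : bool * bool => (nat_of_bool p.1 + nat_of_bool p.2)%N) (zip S Y).

Lemma sum_allmasksS n (f : bitseq -> int) :
  \sum_(Y <- allmasks n.+1) f Y =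
  \sum_(Y <- allmasks n) f (true :: Y) + \sum_(Y <- allmasks n) f (false :: Y).
Proof. by rewrite /= big_cat !big_map. Qed.

Lemma sum_allmasks0 (f : bitseq -> int) : \sum_(Y <- allmasks 0) f Y = f [::].
Proof. by rewrite /= big_cons big_nil addr0. Qed.

Lemma big_mul0l (s : seq bitseq) (f : bitseq -> int) : \sum_(Y <- s) 0 * f Y = 0.
Proof. by rewrite big1 // => i _; rewrite mul0r. Qed.
Lemma big_mul0r (s : seq bitseq) (f : bitseq -> int) : \sum_(Y <- s) f Y * 0 = 0.
Proof. by rewrite big1 // => i _; rewrite mulr0. Qed.

Lemma kernel_pm m (S Z : bitseq) : size S = m -> size Z = m ->
  \sum_(Y <- allmasks m) Dn 1 (pl S Y) * Dn (-1) (pl (map negb Y) Z)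
  = (Z == map negb S)%:Z.
Proof.
elim: m S Z => [|m IH] [|a S] [|z Z] //= HS HZ.
  by rewrite sum_allmasks0.
case: HS => HS; case: HZ => HZ.
rewrite sum_allmasksS /= eqseq_cons.
case: a; case: z => /=; rewrite ?big_mul0l ?big_mul0r ?add0r ?addr0 ?IH //.
case: m {IH} S Z HS HZ => [|m] [|a S] [|z Z] //= HS HZ.
  by rewrite !sum_allmasks0 /= mulr0 mul0r addr0.
rewrite !sum_allmasksS /=.
case: a; case: z => /=; rewrite ?big_mul0l ?big_mul0r ?add0r ?addr0 //.
rewrite -big_split /= big1 // => Y _; ring.
Qed.

Inductive ct := C0 | Cp | Cm.

Definition Kd (t : ct) (S Y : bitseq) : int :=
  match t with
  | C0 => if all (fun e => e == 1%N) (pl S Y) then 1 else 0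
  | Cp => Dn 1 (pl S Y)
  | Cm => Dn (-1) (pl S Y)
  end.

Fixpoint ZZ (m : nat) (w : seq ct) (S : bitseq) : int :=
  match w with
  | [::] => if S == nseq m false then 1 else 0
  | t :: w' => \sum_(Y <- allmasks m) Kd t S Y * ZZ m w' Y
  end.

Lemma pl_all1 (S Y : bitseq) : size S = size Y ->
  all (fun e => e == 1%N) (pl S Y) = (Y == map negb S).
Proof.
elim: S Y => [|a S IH] [|y Y] //= [] H.
by rewrite eqseq_cons IH //; case: a; case: y.
Qed.

Lemma K0_sum m (S : bitseq) (f : bitseq -> int) : size S = m ->
  \sum_(Y <- allmasks m) Kd C0 S Y * f Y = f (map negb S).
Proof.
move=> HS.
have Hin : map negb S \in allmasks m by rewrite mem_allmasks size_map HS.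
rewrite (bigD1_seq _ Hin (allmasks_uniq m)) /= big_seq_cond big1.
  by rewrite pl_all1 ?size_map // eqxx mul1r addr0.
move=> Y /andP[]; rewrite mem_allmasks => /eqP HY HnY.
by rewrite pl_all1 ?HY // (negbTE HnY) mul0r.
Qed.

Lemma ZZ_00 m w (S : bitseq) : size S = m -> ZZ m (C0 :: C0 :: w) S = ZZ m w S.
Proof.
move=> HS /=.
rewrite (K0_sum (fun Y => \sum_(Y0 <- allmasks m) Kd C0 Y Y0 * ZZ m w Y0)) //.
by rewrite K0_sum ?size_map // (mapK negbK).
Qed.

Lemma ZZ_pzm m w (S : bitseq) : size S = m -> ZZ m (Cp :: C0 :: Cm :: w) S = ZZ m (C0 :: w) S.
Proof.
move=> HS; rewrite [LHS]/= [RHS]/= K0_sum //.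
transitivity (\sum_(Y <- allmasks m) Dn 1 (pl S Y) *
   \sum_(Z <- allmasks m) Dn (-1) (pl (map negb Y) Z) * ZZ m w Z).
  rewrite !big_seq; apply: eq_bigr => Y; rewrite mem_allmasks => /eqP HY.
  by rewrite /= (K0_sum (fun Y' => \sum_(Y0 <- allmasks m) Kd Cm Y' Y0 * ZZ m w Y0)).
under eq_bigr do rewrite big_distrr /=.
rewrite exchange_big /=.
transitivity (\sum_(Z <- allmasks m) (Z == map negb S)%:Z * ZZ m w Z).
  rewrite !big_seq; apply: eq_bigr => Z; rewrite mem_allmasks => /eqP HZ.
  rewrite -(kernel_pm HS HZ) big_distrl /=; apply: eq_bigr => Y _; ring.
have Hin : map negb S \in allmasks m by rewrite mem_allmasks size_map HS.
rewrite (bigD1_seq _ Hin (allmasks_uniq m)) /= eqxx mul1r big1 ?addr0 //.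
by move=> Z /negbTE ->; rewrite mul0r.
Qed.

Lemma ZZ_prefix m w1 w w' :
  (forall S, size S = m -> ZZ m w S = ZZ m w' S) ->
  forall S, size S = m -> ZZ m (w1 ++ w) S = ZZ m (w1 ++ w') S.
Proof.
move=> H; elim: w1 => [|t w1 IH] S HS //=; first exact: H.
rewrite !big_seq; apply: eq_bigr => Y; rewrite mem_allmasks => /eqP HY.
by rewrite IH.
Qed.


Definition vrow r k c (s : int) : seq sedge := [seq ((i, c), (i.+1, c), s) | i <- iota r k.-1].

Lemma Phi_scalel es F k : Phi es (fun l => k * F l) = k * Phi es F.
Proof. rewrite mulrC -Phi_scale; apply: Phi_ext => l; exact: mulrC. Qed.

Lemma Phi_nil F : Phi [::] F = F [::]. Proof. by []. Qed.

Lemma Phi_cons e es F : Phi (e :: es) F = Phi es (fun l => F (e :: l)) + Phi es F.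
Proof. by []. Qed.

Lemma count0 (T : Type) (P : pred T) (l : seq T) : (forall x, List.In x l -> ~~ P x) -> count P l = 0%N.
Proof.
elim: l => //= x l IH H; rewrite IH; last by move=> y Hy; apply: H; right.
by rewrite (negbTE (H x (or_introl erefl))).
Qed.

Lemma In_subseq (T : eqType) (x : T) l s : subseq l s -> List.In x l -> x \in s.
Proof.
move=> sub Hx; apply: (mem_subseq sub); elim: l Hx {sub} => //= y l IH [->|H].
  by rewrite mem_head.
by rewrite inE IH ?orbT.
Qed.

Definition vcond r c (E : seq nat) (l : seq sedge) : int :=
  if all (fun j => count (fun e => incident e (r + j, c)%N) l + nth 0%N E j == 1)%N
         (iota 0 (size E)) then \prod_(e <- l) e.2 else 0.

Definition bumph (E : seq nat) := if E is x :: xs then x.+1 :: xs else [::].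

Lemma incident_v i c s v : incident ((i, c), (i.+1, c), s) v = (v == (i, c)) || (v == (i.+1, c)).
Proof. by []. Qed.

Lemma iota0S n : iota 0 n.+1 = 0%N :: map (addn 1) (iota 0 n).
Proof. by rewrite -iotaDl. Qed.

Lemma vrow_far r k c s (l : seq sedge) : subseq l (vrow r.+1 k c s) ->
  count (fun e => incident e (r, c)) l = 0%N.
Proof.
move=> sub; apply: count0 => x /(In_subseq sub) /mapP[i]; rewrite mem_iota => Hi ->.
rewrite incident_v !xpair_eqE negb_or !negb_and; apply/andP; split; apply/orP; left;
  apply/eqP; lia.
Qed.

Lemma vcond_tl r c s e E (l : seq sedge) : subseq l (vrow r.+1 (size E) c s) ->
  vcond r c (e :: E) l = (if e == 1%N then 1 else 0) * vcond r.+1 c E l.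
Proof.
move=> sub; rewrite /vcond (_ : size (e :: E) = (size E).+1) // iota0S /= all_map addn0 (vrow_far sub) add0n.
case: (e == 1%N); rewrite ?mul1r ?mul0r //.
congr (if _ then _ else _); apply: eq_all => j /=.
by rewrite add1n addSnnS.
Qed.

Lemma all_iota0S (P : pred nat) n : all P (iota 0 n.+1) = P 0%N && all (fun j => P j.+1) (iota 0 n).
Proof. by rewrite iota0S /= all_map. Qed.

Lemma vcond_hd r c s e E (l : seq sedge) : E != [::] -> subseq l (vrow r.+1 (size E) c s) ->
  vcond r c (e :: E) (((r, c), (r.+1, c), s) :: l) =
  (if e == 0%N then s else 0) * vcond r.+1 c (bumph E) l.
Proof.
case: E => // x E _ sub; rewrite /vcond.
rewrite (_ : size [:: e, x & E] = (size E).+2) // (_ : size (bumph (x :: E)) = (size E).+1) //.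
rewrite !all_iota0S.
set e0 := (r, c, (r.+1, c), s).
have h0 : (count (fun e1 => incident e1 (r + 0, c)) (e0 :: l) + nth 0 [:: e, x & E] 0 == 1)%N = (e == 0%N).
  rewrite /= addn0 (vrow_far sub) incident_v eqxx /=; by case: e.
have h1 : (count (fun e1 => incident e1 (r + 1, c)) (e0 :: l) + nth 0 [:: e, x & E] 1 == 1)%N =
          (count (fun e1 => incident e1 (r.+1 + 0, c)) l + nth 0 (bumph (x :: E)) 0 == 1)%N.
  rewrite /= incident_v addn0 addn1 eqxx orbT /= add1n addnS; by [].
have h2 : all (fun j => (count (fun e1 => incident e1 (r + j.+2, c)) (e0 :: l) + nth 0 [:: e, x & E] j.+2 == 1)%N) (iota 0 (size E)) =
          all (fun j => (count (fun e1 => incident e1 (r.+1 + j.+1, c)) l + nth 0 (bumph (x :: E)) j.+1 == 1)%N) (iota 0 (size E)).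
  apply: eq_all => j /=; rewrite incident_v !xpair_eqE eqxx !andbT.
  have -> : (r + j.+2 == r)%N = false by apply/eqP; lia.
  have -> : (r + j.+2 == r.+1)%N = false by apply/eqP; lia.
  by rewrite /= add0n addSnnS.
rewrite h0 h1 h2 big_cons.
case: (e == 0%N); rewrite ?mul0r ?andFb //.
by rewrite /= ; case: ifP; rewrite ?mulr0.
Qed.

Lemma VC k : forall r c s (E : seq nat), size E = k ->
  Phi (vrow r k c s) (vcond r c E) = Dn s E.
Proof.
elim: k => [|k IH] r c s [|e E] //= HE.
  by rewrite /vcond /= big_nil.
case: HE => HE.
case: E HE => [|e' E''] HE.
  rewrite -HE /vrow /= /vcond /= big_nil add0n andbT.
  by case: (e == 1%N); case: (e == 0%N).
rewrite -HE.
have -> : vrow r (size (e' :: E'')).+1 c s = ((r, c), (r.+1, c), s) :: vrow r.+1 (size (e' :: E'')) c s by [].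
rewrite Phi_cons.
transitivity (Phi (vrow r.+1 (size (e' :: E'')) c s) (fun l => (if e == 0%N then s else 0) * vcond r.+1 c (bumph (e' :: E'')) l)
  + Phi (vrow r.+1 (size (e' :: E'')) c s) (fun l => (if e == 1%N then 1 else 0) * vcond r.+1 c (e' :: E'') l)).
  congr (_ + _); apply: Phi_ext_sub => l sub.
    by rewrite (vcond_hd e (E := e' :: E'') _ sub).
  by rewrite (vcond_tl e sub).
rewrite !Phi_scalel HE !IH //=.
clear HE; by case: e => [|[|e]] /=; rewrite ?mul0r ?mul1r ?addr0 ?add0r //; case: e' => [|e'] /=; rewrite ?mulr0.
Qed.

Lemma nth_pl (S Y : bitseq) j : size S = size Y ->
  nth 0%N (pl S Y) j = (nth false S j + nth false Y j)%N.
Proof.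
elim: S Y j => [|a S IH] [|y Y] j //= H; first by rewrite !nth_nil.
by case: j => [|j] //=; rewrite IH //; case: H.
Qed.

Lemma size_pl (S Y : bitseq) : size S = size Y -> size (pl S Y) = size S.
Proof. by move=> H; rewrite size_map size_zip H minnn. Qed.

Definition colF c (S Y : bitseq) (lv : seq sedge) : int :=
  if all (fun i => (count (fun e => incident e (i, c)) lv + nth false S i.-1 + nth false Y i.-1 == 1)%N)
         (iota 1 (size S)) then \prod_(e <- lv) e.2 else 0.

Lemma colF_vcond c (S Y : bitseq) lv : size S = size Y -> colF c S Y lv = vcond 1 c (pl S Y) lv.
Proof.
move=> H; rewrite /colF /vcond size_pl // (iotaDl 1 0) all_map.
congr (if _ then _ else _); apply: eq_in_all => j; rewrite mem_iota /= => Hj.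
by rewrite nth_pl // addnA.
Qed.

Definition vt m c t : seq sedge :=
  match t with C0 => [::] | Cp => vrow 1 m c 1 | Cm => vrow 1 m c (-1) end.

Lemma all_iota_nth (P : pred nat) (s : seq nat) :
  all P s = all (fun j => P (nth 0%N s j)) (iota 0 (size s)).
Proof. by rewrite -[in LHS](mkseq_nth 0%N s) /mkseq all_map. Qed.

Lemma KC m c t (S Y : bitseq) : size S = m -> size Y = m ->
  Phi (vt m c t) (colF c S Y) = Kd t S Y.
Proof.
move=> HS HY.
have HSY : size S = size Y by rewrite HS HY.
case: t => /=.
- rewrite colF_vcond // /vcond big_nil [in RHS]all_iota_nth.
  by congr (if _ then _ else _); apply: eq_all => j /=; rewrite add0n.
- rewrite (@Phi_ext _ _ (vcond 1 c (pl S Y))); last by move=> l; apply: colF_vcond.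
  by apply: VC; rewrite size_pl.
- rewrite (@Phi_ext _ _ (vcond 1 c (pl S Y))); last by move=> l; apply: colF_vcond.
  by apply: VC; rewrite size_pl.
Qed.

Definition hrow c r k : seq sedge := [seq ((i, c), (i, c.+1), 1) | i <- iota r k].
Definition hcol m c := hrow c 1 m.

Fixpoint cedges m c (w : seq ct) : seq sedge :=
  match w with
  | [::] => [::]
  | t :: w' => vt m c t ++ (if w' is [::] then [::] else hcol m c) ++ cedges m c.+1 w'
  end.

Fixpoint cverts m c (w : seq ct) : seq vertex :=
  match w with
  | [::] => [::]
  | t :: w' => [seq (i, c) | i <- iota 1 m] ++ cverts m c.+1 w'
  end.

Definition ext c (S : bitseq) (v : vertex) : nat := if v.2 == c then nat_of_bool (nth false S v.1.-1) else 0%N.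

Definition zF m c w (S : bitseq) (l : seq sedge) : int :=
  if all (fun v => count (fun e => incident e v) l + ext c S v == 1)%N (cverts m c w)
  then \prod_(e <- l) e.2 else 0.

Definition Zf m c w S := Phi (cedges m c w) (zF m c w S).

Lemma count_hrow c k : forall r (Y : bitseq) i j,
  count (fun e => incident e (i, j)) (mask Y (hrow c r k)) =
  if (r <= i < r + k)%N && ((j == c) || (j == c.+1)) then nat_of_bool (nth false Y (i - r)) else 0%N.
Proof.
elim: k => [|k IH] r Y i j.
  by rewrite /hrow /= mask0 /=; case: ifP => //; rewrite addn0; case/andP => /andP[] H1 H2; lia.
case: Y => [|y Y].
  by rewrite /= nth_nil; case: ifP.
rewrite (_ : hrow c r k.+1 = ((r,c),(r,c.+1),1) :: hrow c r.+1 k) // mask_cons count_cat IH count_nseq.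
rewrite /incident /= !xpair_eqE.
case: (ltngtP i r) => Hir.
- by [].
- rewrite addSnnS /= add0n (_ : i - r = (i - r.+1).+1)%N //; lia.
- subst i; rewrite addnS ltnS leq_addr subnn /= addn0.
  by case: (j == c); case: (j == c.+1); case: y.
Qed.

Lemma mem_vt m c t e : e \in vt m c t -> (e.1.1.2 == c) && (e.1.2.2 == c).
Proof. by case: t => //= /mapP[i _ ->] /=; rewrite !eqxx. Qed.

Lemma mem_hrow c r k e : e \in hrow c r k -> [&& e.1.1.2 == c, e.1.2.2 == c.+1 & e.2 == 1].
Proof. by case/mapP=> i _ -> /=; rewrite !eqxx. Qed.

Lemma mem_cedges m c w e : e \in cedges m c w -> (c <= e.1.1.2)%N && (c <= e.1.2.2)%N.
Proof.
elim: w c => //= t w IH c; rewrite !mem_cat => /orP[/mem_vt|/orP[]].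
- by case/andP => /eqP -> /eqP ->; rewrite leqnn.
- by case: w {IH} => //; rewrite /hcol => _ _ /mem_hrow /and3P[/eqP -> /eqP -> _]; rewrite leqnn leqnSn.
- by move/IH => /andP[H1 H2]; rewrite !(ltnW H1) !(ltnW H2).
Qed.

Lemma mem_cverts m c w v : v \in cverts m c w -> (c <= v.2)%N && (1 <= v.1 <= m)%N.
Proof.
elim: w c => //= t w IH c; rewrite mem_cat => /orP[/mapP[i] | /IH /andP[H1 H2]].
  by rewrite mem_iota => Hi -> /=; rewrite leqnn /=; lia.
by rewrite (ltnW H1).
Qed.

Lemma count_far m c w (l : seq sedge) i j : subseq l (cedges m c w) -> (j < c)%N ->
  count (fun e => incident e (i, j)) l = 0%N.
Proof.
move=> sub Hj; apply: count0 => e /(In_subseq sub) /mem_cedges /andP[].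
case: e => [[[a b] [a' b']] s] /= H1 H2.
rewrite /incident /= !xpair_eqE negb_or !negb_and; apply/andP; split; apply/orP; right;
  apply/eqP; lia.
Qed.

Lemma count_vt m c t (l : seq sedge) i j : subseq l (vt m c t) -> j != c ->
  count (fun e => incident e (i, j)) l = 0%N.
Proof.
move=> sub Hj; apply: count0 => e /(In_subseq sub) /mem_vt /andP[].
case: e => [[[a b] [a' b']] s] /= /eqP H1 /eqP H2.
by rewrite /incident /= !xpair_eqE H1 H2 (negbTE Hj) !andbF.
Qed.

Lemma prod_hrow c r k (Y : bitseq) : \prod_(e <- mask Y (hrow c r k)) e.2 = 1.
Proof.
rewrite big_seq big1 // => e /mem_mask /mem_hrow /and3P[_ _ /eqP ->]; by [].
Qed.

Lemma zF_split m c t t' w (S Y : bitseq) lv lr :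
  size S = m -> size Y = m ->
  subseq lv (vt m c t) -> subseq lr (cedges m c.+1 (t' :: w)) ->
  zF m c (t :: t' :: w) S (lv ++ mask Y (hcol m c) ++ lr) =
  colF c S Y lv * zF m c.+1 (t' :: w) Y lr.
Proof.
move=> HS HY slv slr.
rewrite /zF /colF (_ : cverts m c (t :: t' :: w) = [seq (i,c) | i <- iota 1 m] ++ cverts m c.+1 (t' :: w)) //.
rewrite all_cat all_map HS big_cat big_cat /= prod_hrow mul1r.
set A := all _ (iota 1 m); set A' := all _ (iota 1 m).
have -> : A = A'.
  apply: eq_in_all => i; rewrite mem_iota => Hi /=.
  rewrite !count_cat (count_far _ slr) ?ltnSn // addn0 /hcol count_hrow.
  rewrite /ext /= eqxx Hi /= subn1; by rewrite addnAC.
set V := (_ ++ cverts m c.+2 w).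
set B := all _ V; set B' := all _ V.
have -> : B = B'.
  apply: eq_in_all => -[i j] HV.
  have /mem_cverts /= /andP[Hj Hi] : (i, j) \in cverts m c.+1 (t' :: w) by [].
  rewrite !count_cat (count_vt _ slv); last by apply/eqP; lia.
  rewrite add0n /hcol count_hrow /ext /=.
  have -> : (j == c) = false by apply/eqP; lia.
  rewrite addn0 /=.
  have -> : (1 <= i < 1 + m)%N = true by lia.
  rewrite subn1 /=.
  by case: (j == c.+1); rewrite ?addn0 // addnC.
by case: A'; case: B'; rewrite ?mulr0 ?mul0r.
Qed.

Lemma size_hrow c r k : size (hrow c r k) = k.
Proof. by rewrite size_map size_iota. Qed.

Lemma ZfS m c t t' w (S : bitseq) : size S = m ->
  Zf m c (t :: t' :: w) S = \sum_(Y <- allmasks m) Kd t S Y * Zf m c.+1 (t' :: w) Y.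
Proof.
move=> HS; rewrite /Zf [cedges m c _]/= -/(cedges m c.+1 (t' :: w)) Phi_cat.
transitivity (Phi (vt m c t) (fun lv => \sum_(Y <- allmasks m) colF c S Y lv * Zf m c.+1 (t' :: w) Y)).
  apply: Phi_ext_sub => lv slv.
  rewrite Phi_cat Phi_mask /hcol size_hrow big_seq [RHS]big_seq; apply: eq_bigr => Y.
  rewrite mem_allmasks => /eqP HY.
  rewrite /Zf -Phi_scalel; apply: Phi_ext_sub => lr slr.
  exact: zF_split.
rewrite Phi_sum big_seq [RHS]big_seq; apply: eq_bigr => Y; rewrite mem_allmasks => /eqP HY.
by rewrite Phi_scale KC.
Qed.

Lemma Zf1 m c t (S : bitseq) : size S = m -> Zf m c [:: t] S = Kd t S (nseq m false).
Proof.
move=> HS; rewrite /Zf /= cats0 -(KC c t HS (size_nseq m false)).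
apply: Phi_ext => lv; rewrite /zF /colF /= cats0 all_map HS.
congr (if _ then _ else _); apply: eq_in_all => i; rewrite mem_iota => Hi /=.
by rewrite /ext /= eqxx nth_nseq if_same addn0.
Qed.

Lemma Zf_ZZ m w : forall c (S : bitseq), (0 < size w)%N -> size S = m -> Zf m c w S = ZZ m w S.
Proof.
elim: w => // t w IH c S _ HS.
case: w IH => [|t' w] IH.
  have Hin : nseq m false \in allmasks m by rewrite mem_allmasks size_nseq.
  rewrite Zf1 //= (bigD1_seq _ Hin (allmasks_uniq m)) /=.
  rewrite eqxx mulr1 big_seq_cond big1 ?addr0 // => Y /andP[_ /negbTE ->]; by rewrite mulr0.
rewrite ZfS // [RHS]/= big_seq [RHS]big_seq; apply: eq_bigr => Y; rewrite mem_allmasks => /eqP HY.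
by rewrite IH.
Qed.


Definition rep G m w := [/\ nrows G = m, ncols G = size w, (0 < size w)%N & perm_eq (edges G) (cedges m 1 w)].

Lemma pmF_perm V : perm_inv (pmF V).
Proof.
move=> l l' /permP H; rewrite /pmF.
have -> : all (fun v => count (fun e => incident e v) l == 1%N) V =
          all (fun v => count (fun e => incident e v) l' == 1%N) V.
  by apply: eq_all => v; rewrite H.
by case: ifP => //; rewrite (perm_big l') //; apply/permP.
Qed.

Lemma mem_cverts_iff m c w v : (v \in cverts m c w) = (1 <= v.1 <= m)%N && (c <= v.2 < c + size w)%N.
Proof.
case: v => i j /=.
elim: w c => [|t w IH] c /=.
  by rewrite addn0 in_nil; symmetry; apply/negbTE/negP => /andP[_ /andP[H1 H2]]; lia.
rewrite mem_cat IH.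
apply/idP/idP.
  case/orP => [/mapP[k]|]; first by rewrite mem_iota => Hk [-> ->]; apply/andP; split; lia.
  move/andP=> [H1 H2]; apply/andP; split => //; lia.
move/andP=> [H1 H2]; case: (ltngtP j c) => Hjc.
- lia.
- apply/orP; right; apply/andP; split => //; lia.
- apply/orP; left; apply/mapP; exists i; first by rewrite mem_iota; lia.
  by rewrite Hjc.
Qed.

Lemma mem_grid G v : (v \in grid_vertices G) = (1 <= v.1 <= nrows G)%N && (1 <= v.2 <= ncols G)%N.
Proof.
case: v => i j /=; apply/idP/idP.
  by case/allpairsP => -[i' j'] /= [Hi Hj [-> ->]]; move: Hi Hj; rewrite !mem_iota => Hi Hj; apply/andP; split; lia.
move/andP=> [Hi Hj]; apply/allpairsP; exists (i, j) => /=; rewrite !mem_iota; split => //; lia.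
Qed.

Lemma rep_Msum G m w : rep G m w -> Msum G = ZZ m w (nseq m false).
Proof.
case=> Hm HN Hw Hp.
rewrite Msum_Phi (Phi_perm (pmF_perm _) Hp) -(Zf_ZZ 1) ?size_nseq //.
apply: Phi_ext => l; rewrite /pmF /zF.
congr (if _ then _ else _).
rewrite (eq_all_r (s2 := cverts m 1 w)); last first.
  by move=> v; rewrite mem_grid mem_cverts_iff Hm HN add1n ltnS.
apply: eq_all => v; rewrite /ext nth_nseq if_same; by case: ifP; rewrite addn0.
Qed.

Lemma map_shift_cedges d m w : forall c, map (shift_edge d) (cedges m c w) = cedges m (c + d) w.
Proof.
elim: w => //= t w IH c; rewrite !map_cat IH addSn; congr (_ ++ _ ++ _).
- case: t => //=; rewrite /vrow -map_comp; apply: eq_map => i //.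
- case: w {IH} => // _ _; rewrite /hcol /hrow -map_comp; apply: eq_map => i /=.
  by rewrite /shift_edge /= addSn.
Qed.

Lemma cedges_cat m w1 w2 : forall c, (0 < size w1)%N -> (0 < size w2)%N ->
  perm_eq (cedges m c (w1 ++ w2)) (cedges m c w1 ++ cedges m (c + size w1) w2 ++ hcol m (c + size w1).-1).
Proof.
elim: w1 => // t w1 IH c _ H2.
case: w1 IH => [|t' w1] IH.
  rewrite /= cats0 addn1 /=; case: w2 {IH} H2 => // t2 w2 _.
  by rewrite perm_cat2l perm_catC.
have eqL : cedges m c ((t :: t' :: w1) ++ w2) = vt m c t ++ hcol m c ++ cedges m c.+1 ((t' :: w1) ++ w2) by [].
have eqR : cedges m c (t :: t' :: w1) = vt m c t ++ hcol m c ++ cedges m c.+1 (t' :: w1) by [].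
rewrite eqL eqR -catA perm_cat2l -catA perm_cat2l.
have -> : (c + size [:: t, t' & w1] = c.+1 + size (t' :: w1))%N by rewrite /= addSnnS.
exact: IH.
Qed.

Lemma rep_adjoin G1 G2 m w1 w2 : rep G1 m w1 -> rep G2 m w2 -> rep (adjoin G1 G2) m (w1 ++ w2).
Proof.
case=> Hm1 HN1 Hw1 Hp1 [Hm2 HN2 Hw2 Hp2]; split => //=.
- by rewrite size_cat HN1 HN2.
- by rewrite size_cat addn_gt0 Hw1.
rewrite perm_sym; apply: (perm_trans (cedges_cat m 1 Hw1 Hw2)); rewrite perm_sym.
rewrite /= Hm1 HN1; apply: perm_cat; first exact: Hp1.
apply: perm_cat; first by rewrite -map_shift_cedges; apply: perm_map.
by rewrite add0n /hcol /hrow.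
Qed.

Lemma allpairs_flat (A B : Type) (f : A -> B -> sedge) s t :
  [seq f i j | i <- s, j <- t] = flatten [seq [seq f i j | j <- t] | i <- s].
Proof. by elim: s => //= i s IH; rewrite allpairs_cons IH. Qed.

Lemma allpairs_T (A B : Type) (f : A -> B -> sedge) s t :
  perm_eq [seq f i j | i <- s, j <- t] [seq f i j | j <- t, i <- s].
Proof.
elim: s => [|i s IH].
  by elim: t => //= j t IHt; rewrite allpairs_cons.
have /permPl H := perm_allpairs_consr (fun j i' => f i' j) t (fun=> i) (fun=> s).
rewrite allpairs_cons perm_sym; apply: (perm_trans H).
by rewrite perm_sym perm_cat2l.
Qed.

Fixpoint vall m c (w : seq ct) : seq sedge := if w is t :: w' then vt m c t ++ vall m c.+1 w' else [::].
Definition hall m c n := flatten [seq hcol m j | j <- iota c n.-1].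

Lemma cedges_split m w : forall c, perm_eq (cedges m c w) (vall m c w ++ hall m c (size w)).
Proof.
elim: w => // t w IH c /=.
case: w IH => [|t' w] IH.
  by rewrite /hall /= !cats0.
have -> : hall m c (size (t' :: w)).+1 = hcol m c ++ hall m c.+1 (size (t' :: w)) by [].
rewrite -catA perm_cat2l.
have H1 : perm_eq (hcol m c ++ cedges m c.+1 (t' :: w)) (hcol m c ++ (vall m c.+1 (t' :: w) ++ hall m c.+1 (size (t' :: w)))).
  by rewrite perm_cat2l.
apply: (perm_trans H1); by rewrite perm_catCA.
Qed.

Lemma vall_cat m w1 w2 : forall c, vall m c (w1 ++ w2) = vall m c w1 ++ vall m (c + size w1) w2.
Proof.
elim: w1 => [|t w1 IH] c /=; first by rewrite addn0.
by rewrite IH catA addSnnS.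
Qed.

Lemma vall_nseq m n t : forall c, vall m c (nseq n t) = flatten [seq vt m j t | j <- iota c n].
Proof. by elim: n => //= n IH c; rewrite IH. Qed.

Definition wd (x : int) : seq ct :=
  if (0 < x) then nseq `|x|%N Cp else C0 :: nseq `|x|%N Cm ++ [:: C0].

Lemma hedges_hall m N : perm_eq (hedges m N) (hall m 1 N).
Proof.
rewrite /hedges /hall; apply: (perm_trans (allpairs_T _ _ _)).
by rewrite allpairs_flat.
Qed.

Lemma rep_grid m x : rep (gridG m x) m (wd x).
Proof.
rewrite /gridG /wd; case: ifP => Hx; split => //=.
all: try by rewrite size_nseq.
all: try by rewrite size_nseq absz_gt0; apply: lt0r_neq0.
all: try by rewrite size_cat size_nseq /= addn1 add2n.
- apply: (@perm_trans _ (vall m 1 (nseq `|x| Cp) ++ hall m 1 (size (nseq `|x| Cp)))); last first.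
    by rewrite perm_sym cedges_split.
  rewrite size_nseq perm_catC; apply: perm_cat; last exact: hedges_hall.
  rewrite vall_nseq /vedges; apply: (perm_trans (allpairs_T _ _ _)).
  by rewrite allpairs_flat.
- set w := C0 :: nseq `|x| Cm ++ [:: C0].
  apply: (@perm_trans _ (vall m 1 w ++ hall m 1 (size w))); last first.
    by rewrite perm_sym (cedges_split m w 1).
  have -> : size w = (2 + `|x|)%N by rewrite /w /= size_cat size_nseq addn1 add2n.
  rewrite perm_catC; apply: perm_cat; last exact: hedges_hall.
  rewrite /w /= vall_cat vall_nseq /= cats0 /vedges; apply: (perm_trans (allpairs_T _ _ _)).
  by rewrite allpairs_flat.
Qed.


Lemma wdN n : wd (- n%:Z) = C0 :: nseq n Cm ++ [:: C0].
Proof.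
rewrite /wd abszN absz_nat.
have -> : (0 < - n%:Z) = false by rewrite oppr_gt0 ltNge.
by [].
Qed.

Lemma wdP n : (0 < n)%N -> wd n%:Z = nseq n Cp.
Proof. by move=> Hn; rewrite /wd ltz_nat Hn absz_nat. Qed.

Lemma wd0 : wd 0 = [:: C0; C0].
Proof. by []. Qed.

Lemma MsumW G m w : rep G m w -> Msum G = ZZ m w (nseq m false).
Proof. exact: rep_Msum. Qed.

Unset Implicit Arguments.
Theorem mainTheorem4 (m : nat) (hm : (1 <= m)%N) :
  (forall a b : nat, (1 <= a)%N -> (1 <= b)%N ->
     Msum (adjoin (gridG m a%:Z) (gridG m (- b%:Z)))
     = Msum (adjoin (gridG m (a%:Z - 1)) (gridG m (- (b%:Z - 1))))) /\
  (forall a b : nat,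
     Msum (adjoin (gridG m (- a%:Z)) (gridG m (- b%:Z)))
     = Msum (gridG m (- (a%:Z + b%:Z)))).
Proof.
have HS : size (nseq m false) = m by rewrite size_nseq.
split.
- move=> [|a] [|b] // _ _.
  rewrite !(MsumW (rep_adjoin (rep_grid _ _) (rep_grid _ _))).
  have -> : (a.+1%:Z - 1 = a%:Z) by rewrite -[a.+1]addn1 PoszD addrK.
  have -> : (b.+1%:Z - 1 = b%:Z) by rewrite -[b.+1]addn1 PoszD addrK.
  rewrite wdP // !wdN.
  have -> : nseq a.+1 Cp ++ C0 :: nseq b.+1 Cm ++ [:: C0]
          = nseq a Cp ++ (Cp :: C0 :: Cm :: (nseq b Cm ++ [:: C0])).
    by elim: a => //= a ->.
  rewrite (ZZ_prefix (w' := C0 :: (nseq b Cm ++ [:: C0])) _ _ HS); last first.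
    by move=> S HS'; apply: ZZ_pzm.
  case: a => [|a].
    by rewrite wd0 ZZ_00.
  by rewrite wdP.
- move=> a b.
  rewrite (MsumW (rep_adjoin (rep_grid _ _) (rep_grid _ _))) (MsumW (rep_grid _ _)).

  have -> : - (a%:Z + b%:Z) = - (a + b)%N%:Z by rewrite PoszD.
  rewrite !wdN.
  have -> : (C0 :: nseq a Cm ++ [:: C0]) ++ C0 :: nseq b Cm ++ [:: C0]
          = (C0 :: nseq a Cm) ++ (C0 :: C0 :: (nseq b Cm ++ [:: C0])) by rewrite /= -catA.
  rewrite (ZZ_prefix (w' := nseq b Cm ++ [:: C0]) _ _ HS); last first.
    by move=> S HS'; apply: ZZ_00.
  by rewrite nseqD cat_cons catA.
Qed.
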